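(* There exist solutions $u\in C(G^h)$ of $F^{W,h}[u](x)=0$ for all $x\in G^h$, and they are fixed points of the map $T:C(G^h)\to C(G^h)$ given by $$T(u)(x)=\min_{v\in\mathcal{D}^W}\min\Big(g(x),\ \frac{u(x+hv)+u(x-hv)}{2}\Big)\ \ (x\in G^h_V),\qquad T(u)(x)=g(x)\ \ (x\in\partial G^h).$$
   Context: Let $\Omega\subset D=[-1,1]^n$, $h>0$, $g\in C(G^h)$. Grid: $G^h=\{x\in h\mathbb{Z}^n: x\in D\}$, $G^h_V=\Omega\cap G^h$, $\partial G^h=G^h\setminus G^h_V$; $C(G^h)$ is the set of functions $G^h\to\mathbb{R}$. A grid direction set $\mathcal{D}^W$ is a finite set of nonzero vectors of $\mathbb{Z}^n$ spanning $\mathbb{R}^n$ and closed under $v\mapsto-v$; $h$ is assumed small enough that $x\pm hv\in G^h$ for all $x\in G^h_V$, $v\in\mathcal{D}^W$. For $v\in\mathcal{D}^W$, $D^h_{vv}u(x)=\frac{u(x+hv)-2u(x)+u(x-hv)}{h^2\|v\|^2}$ ($x\in G^h_V$), $\lambda^h_{\mathcal{D}^W}[u](x)=\min_{v\in\mathcal{D}^W}D^h_{vv}u(x)$, and $F^{W,h}[u](x)=\max\{u(x)-g(x),-\lambda^h_{\mathcal{D}^W}[u](x)\}$ for $x\in G^h_V$, $F^{W,h}[u](x)=u(x)-g(x)$ for $x\in\partial G^h$. *)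

(* Defs.v *)
From HB Require Import structures.
From mathcomp Require Import all_boot all_order all_algebra.
From mathcomp Require Import boolp classical_sets reals.
Set Implicit Arguments. Unset Strict Implicit. Unset Printing Implicit Defensive.
Import Order.TTheory GRing.Theory Num.Theory.
Local Open Scope ring_scope.
Local Open Scope classical_set_scope.

Section Grid.
Variables (R : realType) (n : nat) (h : R).

Definition gpt (k : 'rV[int]_n) : 'rV[R]_n := map_mx (fun z : int => h * z%:~R) k.

Definition inD (x : 'rV[R]_n) : Prop := forall i : 'I_n, `|x 0 i| <= 1.

(* k indexes a point of G^h = h Z^n ∩ D *)
Definition inG (k : 'rV[int]_n) : Prop := inD (gpt k).

(* k indexes a point of G^h_V = Ω ∩ G^h *)
Definition inGV (Om : set 'rV[R]_n) (k : 'rV[int]_n) : bool :=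
  (gpt k \in Om) && `[< inG k >].

Definition normsq (v : 'rV[int]_n) : R := \sum_(i < n) ((v 0 i)%:~R) ^+ 2.

(* minimum of a finite (nonempty) list of reals; the empty case never occurs below *)
Definition seqmin (s : seq R) : R :=
  match s with [::] => 0 | a :: s' => foldr Num.min a s' end.

Definition grid_direction_set (W : seq 'rV[int]_n) : Prop :=
  (forall v, v \in W -> v != 0) /\
  (forall v, v \in W -> - v \in W) /\
  (span (map (map_mx (fun z : int => (z%:~R : R))) W) = fullv)%VS.

(* second difference D^h_{vv} u(x) at x = h k *)
Definition Dvv (u : 'rV[int]_n -> R) (k v : 'rV[int]_n) : R :=
  (u (k + v) - 2 * u k + u (k - v)) / (h ^+ 2 * normsq v).

Definition lambda_h (W : seq 'rV[int]_n) (u : 'rV[int]_n -> R) (k : 'rV[int]_n) : R :=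
  seqmin [seq Dvv u k v | v <- W].

Definition FWh (Om : set 'rV[R]_n) (W : seq 'rV[int]_n) (g u : 'rV[int]_n -> R)
  (k : 'rV[int]_n) : R :=
  if inGV Om k then Num.max (u k - g k) (- lambda_h W u k) else u k - g k.

Definition Tmap (Om : set 'rV[R]_n) (W : seq 'rV[int]_n) (g u : 'rV[int]_n -> R)
  (k : 'rV[int]_n) : R :=
  if inGV Om k then seqmin [seq Num.min (g k) ((u (k + v) + u (k - v)) / 2) | v <- W]
  else g k.

End Grid.

(* Main.v *)
Require Import Defs.
From HB Require Import structures.
From mathcomp Require Import all_boot all_order all_algebra.
From mathcomp Require Import boolp classical_sets reals.
From mathcomp Require Import lra zify.
Import Order.TTheory GRing.Theory Num.Theory.
Local Open Scope ring_scope.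
Local Open Scope classical_set_scope.

Section Aux.
Variable R : realType.

Lemma foldr_min_le (a : R) s x : x \in a :: s -> foldr Num.min a s <= x.
Proof.
elim: s x => [|b s IH] x /=; first by rewrite inE => /eqP ->.
rewrite !inE => /orP[/eqP->|/orP[/eqP->|xs]].
- by rewrite ge_min; apply/orP; right; apply: IH; rewrite mem_head.
- by rewrite ge_min lexx.
- by rewrite ge_min; apply/orP; right; apply: IH; rewrite inE xs orbT.
Qed.

Lemma foldr_min_in (a : R) s : foldr Num.min a s \in a :: s.
Proof.
elim: s => [|b s IH] /=; first by rewrite mem_head.
rewrite minElt; case: ifP => _.
- by rewrite !inE eqxx ?orbT.
- move: IH; rewrite !inE => /orP[->|->]; by rewrite ?orbT.
Qed.

Lemma seqmin_le (s : seq R) x : x \in s -> seqmin s <= x.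
Proof. by case: s => [//|a s] /=; apply: foldr_min_le. Qed.

Lemma seqmin_in (s : seq R) : s != [::] -> seqmin s \in s.
Proof. by case: s => [//|a s] _ /=; apply: foldr_min_in. Qed.

Lemma seqmin_ge (s : seq R) c : s != [::] -> (forall x, x \in s -> c <= x) ->
  c <= seqmin s.
Proof. by move=> /seqmin_in H1 H2; apply: H2. Qed.

Lemma seqmin_eq (s : seq R) x : x \in s -> (forall y, y \in s -> x <= y) ->
  seqmin s = x.
Proof.
move=> xs H; apply/le_anti; rewrite seqmin_le //=.
apply: H; apply: seqmin_in; by case: s xs.
Qed.

Lemma normsq_gt0 n (v : 'rV[int]_n) : v != 0 -> 0 < normsq R v.
Proof.
move=> vn0.
have [i vi] : exists i, v 0 i != 0.
  apply/existsP; apply: contraR vn0 => /existsPn H.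
  apply/eqP/rowP => i; rewrite mxE; move: (H i); by rewrite negbK => /eqP.
rewrite /normsq (bigD1 i) //=.
have : 0 < ((v 0 i)%:~R : R) ^+ 2 by rewrite lt_def sqr_ge0 sqrf_eq0 intr_eq0 vi.
have : 0 <= \sum_(j < n | j != i) ((v 0 j)%:~R : R) ^+ 2 by apply: sumr_ge0 => j _; apply: sqr_ge0.
lra.
Qed.

Lemma W_nonempty n (W : seq 'rV[int]_n) : (0 < n)%N -> grid_direction_set R W -> W != [::].
Proof.
move=> n0 [_ [_ Hs]]; apply/negP => /eqP WE; move: Hs; rewrite WE /= span_nil.
move/(congr1 (fun U => \dim U)); rewrite dimv0 dimvf /dim /=.
rewrite mul1n => H; move: n0; rewrite -H; by [].
Qed.

End Aux.

Section Aux2.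
Variables (R : realType) (n : nat) (h : R).
Hypothesis h0 : 0 < h.

Lemma den_gt0 (v : 'rV[int]_n) : v != 0 -> 0 < h ^+ 2 * normsq R v.
Proof. by move=> /(normsq_gt0 R) H; rewrite mulr_gt0 // exprn_gt0. Qed.

Lemma Dvv_ge0 (u : 'rV[int]_n -> R) k v : v != 0 ->
  (0 <= Dvv h u k v) = (2 * u k <= u (k + v) + u (k - v)).
Proof.
move=> /den_gt0 d0; rewrite /Dvv ler_pdivlMr // mul0r.
apply/idP/idP => H; lra.
Qed.

Lemma Dvv_eq0 (u : 'rV[int]_n -> R) k v : v != 0 ->
  (Dvv h u k v == 0) = (2 * u k == u (k + v) + u (k - v)).
Proof.
move=> /den_gt0 d0; rewrite /Dvv mulf_eq0 invr_eq0 (gt_eqF d0) orbF.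
apply/eqP/eqP => H; lra.
Qed.

End Aux2.

Lemma fixpt (R : realType) (n : nat) (h : R) (Om : set 'rV[R]_n)
  (g : 'rV[int]_n -> R) (W : seq 'rV[int]_n) (u : 'rV[int]_n -> R) k :
  (0 < n)%N -> 0 < h -> grid_direction_set R W ->
  FWh h Om W g u k = 0 -> Tmap h Om W g u k = u k.
Proof.
move=> n0 h0 gW; have Wne := @W_nonempty R n W n0 gW.
have vnz : forall v, v \in W -> v != 0 by case: gW.
rewrite /FWh /Tmap; case: ifP => Hk F; last lra.
have : Num.max (u k - g k) (- lambda_h h W u k) <= 0 by rewrite F.
rewrite ge_max => /andP[Hug Hl].
have conv : forall v, v \in W -> 2 * u k <= u (k + v) + u (k - v).
  move=> v vW; rewrite -(@Dvv_ge0 R n h h0 u k v (vnz v vW)).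
  have lam0 : 0 <= lambda_h h W u k by lra.
  apply: le_trans lam0 _; apply: seqmin_le; exact: map_f.
have [E|E] : u k - g k = 0 \/ lambda_h h W u k = 0.
  by move: F; rewrite maxElt; case: ifP => _ F; [right|left]; lra.
- apply: seqmin_eq.
  + have [v0 v0W]: exists v, v \in W by case: (W) Wne => [//|v s] _; exists v; rewrite mem_head.
    apply/mapP; exists v0 => //; have := conv v0 v0W.
    rewrite minElt; case: ltP => C; lra.
  + move=> y /mapP[v vW ->]; rewrite le_min; have := conv v vW => H.
    apply/andP; split; lra.
- apply: seqmin_eq.
  + have : lambda_h h W u k \in [seq Dvv h u k v | v <- W].
      by apply: seqmin_in; case: (W) Wne.
    case/mapP => v vW Ev; apply/mapP; exists v => //.
    move: Ev; rewrite E => /esym/eqP; rewrite (@Dvv_eq0 R n h h0 u k v (vnz v vW)) => /eqP H.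
    rewrite minElt; case: ltP => C; lra.
  + move=> y /mapP[v vW ->]; rewrite le_min; have := conv v vW => H.
    apply/andP; split; lra.
Qed.

Lemma grid_bound (R : realType) (n : nat) (h : R) : 0 < h ->
  exists N : nat, forall k : 'rV[int]_n, inG h k -> forall i, (`|k 0 i| < (N.+1)%:Z)%R.
Proof.
move=> h0; exists (Num.truncn h^-1) => k Hk i.
have := Hk i; rewrite /gpt mxE normrM (gtr0_norm h0) -intr_norm => H.
have H2 : (`|k 0 i|%:~R : R) <= h^-1.
  by rewrite -[h^-1]mulr1 ler_pdivlMl.
have := truncnS_gt h^-1.
rewrite -[(Num.truncn h^-1).+1%:R]/(((Num.truncn h^-1).+1%:Z)%:~R : R) => H3.
rewrite -(ltr_int R); exact: le_lt_trans H2 H3.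
Qed.

Lemma g_lower (R : realType) (n : nat) (h : R) (g : 'rV[int]_n -> R) : 0 < h ->
  exists c : R, forall k : 'rV[int]_n, inG h k -> c <= g k.
Proof.
move=> /(@grid_bound R n h) [N HN].
pose phi (f : {ffun 'I_n -> 'I_(N.*2).+1}) : 'rV[int]_n :=
  \row_i (((f i : nat)%:Z - N%:Z)%R).
exists (- \sum_(f : {ffun 'I_n -> 'I_(N.*2).+1}) `|g (phi f)|) => k Hk.
pose f := [ffun i => (inord (absz (k 0 i + N%:Z)%R) : 'I_(N.*2).+1)].
have -> : k = phi f.
  apply/rowP => i; rewrite !mxE ffunE.
  have := HN k Hk i => Hi.
  rewrite inordK; last by lia.
  lia.
rewrite (bigD1 f) //=.
have : 0 <= \sum_(j | j != f) `|g (phi j)| by apply: sumr_ge0 => j _; exact: normr_ge0.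
have := ler_norm (- g (phi f)); rewrite normrN.
lra.
Qed.

Theorem mainTheorem9 (R : realType) (n : nat) (h : R) (Om : set 'rV[R]_n)
  (g : 'rV[int]_n -> R) (W : seq 'rV[int]_n) :
  (0 < n)%N -> 0 < h ->
  Om `<=` inD (n:=n) ->
  grid_direction_set R W ->
  (forall k, inGV h Om k -> forall v, v \in W ->
      inG h (k + v) /\ inG h (k - v)) ->
  (exists u : 'rV[int]_n -> R, forall k, inG h k -> FWh h Om W g u k = 0) /\
  (forall u : 'rV[int]_n -> R, (forall k, inG h k -> FWh h Om W g u k = 0) ->
      forall k, inG h k -> Tmap h Om W g u k = u k).
Proof.
move=> n0 h0 OmD gW Hnb; split; last first.
  by move=> u Hu k Hk; apply: (@fixpt R n h Om g W u k n0 h0 gW); apply: Hu.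
have Wne := @W_nonempty R n W n0 gW.
have vnz : forall v, v \in W -> v != 0 by case: gW.
have [c Hc] := @g_lower R n h g h0.
have GVG : forall k, inGV h Om k -> inG h k by move=> k /andP[_ /asboolP].
pose adm := fun w : 'rV[int]_n -> R => (forall k, inG h k -> w k <= g k) /\
  (forall k, inGV h Om k -> forall v, v \in W -> 2 * w k <= w (k+v) + w (k-v)).
pose u := fun k => sup [set w k | w in adm].
have admc : adm (fun _ => c) by split=> // k _ v _; lra.
have ne : forall k, [set w k | w in adm] !=set0 by move=> k; exists c, (fun _ => c).
have hs : forall k, inG h k -> has_sup [set w k | w in adm].
  move=> k Hk; split; first exact: ne.
  by exists (g k) => y [w [Hw _] <-]; apply: Hw.
have U1 : forall w k, adm w -> inG h k -> w k <= u k.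
  by move=> w k Hw Hk; apply: (sup_upper_bound (hs k Hk)); exists w.
have U2 : forall k, inG h k -> u k <= g k.
  move=> k Hk; apply: ge_sup; first exact: ne.
  by move=> y [w [Hw _] <-]; apply: Hw.
have admu : adm u.
  split => // k Hk v vW.
  have [Hp Hm] := Hnb k Hk v vW.
  suff : u k <= (u (k+v) + u (k-v)) / 2 by lra.
  apply: ge_sup; first exact: ne.
  move=> y [w [Hw1 Hw2] <-].
  have := Hw2 k Hk v vW; have := U1 w (k+v) (conj Hw1 Hw2) Hp.
  have := U1 w (k-v) (conj Hw1 Hw2) Hm; lra.
have upd : forall k m, inG h k -> u k <= m -> m <= g k ->
    (inGV h Om k -> forall v, v \in W -> 2 * m <= u (k+v) + u (k-v)) -> m <= u k.
  move=> k m Hk um mg Hc2.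
  pose w := fun j => if j == k then m else u j.
  have wu : forall j, u j <= w j by move=> j; rewrite /w; case: eqP => [->|]//.
  have admw : adm w.
    split.
    - move=> j Hj; rewrite /w; case: eqP => [->|_] //; exact: U2.
    - move=> j Hj v vW; rewrite {1}/w; case: eqP => [E|_].
      + subst j.
        have kv : k + v != k.
          by apply/negP; rewrite -subr_eq0 addrC addKr; exact/negP/vnz.
        have kv' : k - v != k.
          by apply/negP; rewrite -subr_eq0 addrC addKr oppr_eq0; exact/negP/vnz.
        rewrite /w (negbTE kv) (negbTE kv'); exact: Hc2.
      + have := admu.2 j Hj v vW; have := wu (j+v); have := wu (j-v); lra.
  by have := U1 w k admw Hk; rewrite /w eqxx.
exists u => k Hk; rewrite /FWh; case: ifP => Hv.
- have conv := admu.2 k Hv.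
  pose s := [seq (u (k+v) + u (k-v)) / 2 | v <- W].
  have sne : s != [::] by rewrite /s; case: (W) Wne.
  have sge : forall y, y \in s -> u k <= y.
    by move=> y /mapP[v vW ->]; have := conv v vW; lra.
  have Uk : u k = Num.min (g k) (seqmin s).
    apply/le_anti/andP; split.
    + by rewrite le_min U2 //= seqmin_ge.
    + apply: upd => //.
      * by rewrite le_min U2 //= seqmin_ge.
      * by rewrite ge_min lexx.
      * move=> _ v vW; have : Num.min (g k) (seqmin s) <= (u (k+v) + u (k-v)) / 2.
          by rewrite ge_min; apply/orP; right; apply: seqmin_le; apply: map_f.
        lra.
  have lam0 : 0 <= lambda_h h W u k.
    apply: seqmin_ge; first by case: (W) Wne.
    move=> y /mapP[v vW ->]; rewrite (@Dvv_ge0 R n h h0 u k v (vnz v vW)); exact: conv.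
  have ug := U2 k Hk.
  move: Uk; rewrite minElt; case: ltP => C Uk.
  + rewrite maxElt; case: ltP => C2; lra.
  + have : seqmin s \in s by apply: seqmin_in.
    case/mapP => v vW Ev.
    have : Dvv h u k v == 0.
      by rewrite (@Dvv_eq0 R n h h0 u k v (vnz v vW)); apply/eqP; lra.
    move/eqP => D0.
    have : lambda_h h W u k <= 0 by rewrite -D0; apply: seqmin_le; apply: map_f.
    move=> l0; rewrite maxElt; case: ltP => C2; lra.
- have := upd k (g k) Hk (U2 k Hk) (lexx _) (fun H => ltac:(by rewrite Hv in H)).
  have := U2 k Hk; lra.
Qed.
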